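(* Let $S$ be a random subset of a finite set $L$ and $T$ a random subset of a finite set $R$, and let $(l,r)\in L\times R$. Suppose that all events $\{l'\in S\}$ for $l'\ne l$ and all events $\{r'\in T\}$ for $r'\ne r$ are jointly independent of the event $\{(l,r)\in S\times T\}$. Let $s$ be an element of $S$ chosen uniformly at random and $t$ an element of $T$ chosen uniformly at random ($(s,t)$ is undefined if $S=\varnothing$ or $T=\varnothing$). Then $$\Pr[(l,r)=(s,t)]\ge\frac{\Pr[(l,r)\in S\times T]}{(\mathbb{E}[|S|]+1)(\mathbb{E}[|T|]+1)}.$$ *)

(* Defs.v *)
(* discrete probability on the finite space of outcomes
   (S, T) : {set L} * {set R}, given by its joint law P. *)
From mathcomp Require Import all_boot all_order all_algebra.
Set Implicit Arguments. Unset Strict Implicit. Unset Printing Implicit Defensive.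
Import Order.TTheory GRing.Theory Num.Theory.
Local Open Scope ring_scope.

Definition is_distr (K : realFieldType) (W : finType) (P : W -> K) : Prop :=
  (forall w, 0 <= P w) /\ \sum_(w : W) P w = 1.

Definition Pr (K : realFieldType) (W : finType) (P : W -> K) (A : pred W) : K :=
  \sum_(w : W | A w) P w.

Definition Ex (K : realFieldType) (W : finType) (P : W -> K) (X : W -> K) : K :=
  \sum_(w : W) P w * X w.

Definition inST (L Rs : finType) (l : L) (r : Rs) : pred ({set L} * {set Rs}) :=
  fun w => (l \in w.1) && (r \in w.2).

(* The events {l' \in S} (l' <> l) and {r' \in T} (r' <> r) are jointly
   independent of the event {(l,r) \in S x T}: every event of the
   sigma-algebra they generate, i.e. every event of the form
   F(S \ {l}, T \ {r}), is independent of {(l,r) \in S x T}. *)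
Definition others_indep (K : realFieldType) (L Rs : finType)
    (P : {set L} * {set Rs} -> K) (l : L) (r : Rs) : Prop :=
  forall F : {set L} -> {set Rs} -> bool,
    let G := fun w : {set L} * {set Rs} => F (w.1 :\ l) (w.2 :\ r) in
    Pr P (fun w => G w && inST l r w) = Pr P G * Pr P (inST l r).

(* Pr[(l,r) = (s,t)] where, given (S,T), s is uniform in S and t uniform in T
   (independently); outcomes with S or T empty contribute nothing. *)
Definition Pr_pick (K : realFieldType) (L Rs : finType)
    (P : {set L} * {set Rs} -> K) (l : L) (r : Rs) : K :=
  \sum_(w : {set L} * {set Rs} | inST l r w)
     P w / ((#|w.1|)%:R * (#|w.2|)%:R).

(* Main.v *)
Require Import Defs.
From mathcomp Require Import all_boot all_order all_algebra.
From mathcomp Require Import ring lra.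
Import Order.TTheory GRing.Theory Num.Theory.
Local Open Scope ring_scope.
Lemma aux (K : realFieldType) (u v : K) : 0 < u -> 0 < v -> u * v * (3 - u - v) <= 1.
Proof.
move=> hu hv.
have h1 : 4 * (u * v) <= (u+v)^+2.
  have : 0 <= (u-v)^+2 by exact: sqr_ge0.
  have -> : (u+v)^+2 = (u-v)^+2 + 4 * (u*v) by ring.
  lra.
have h0 : 0 <= (u+v-2)^+2 * (u+v+1) by apply: mulr_ge0; [exact: sqr_ge0| lra].
have h2 : (u+v)^+2 * (3 - (u+v)) <= 4.
  have e : 4 - (u+v)^+2 * (3 - (u+v)) = (u+v-2)^+2 * (u+v+1) by ring.
  rewrite -subr_ge0 e //.
have [hs|hs] := lerP 0 (3 - u - v).
  have := ler_wpM2r hs h1.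
  have -> : 3 - u - v = 3 - (u+v) by ring.
  move: h2; set s := (u+v)^+2; set t := 3 - (u+v); move=> h2 h3. nra.
have : 0 < u * v by exact: mulr_gt0.
move: hs; set t := 3 - u - v; set m := u * v => hs hm.
nra.
Qed.
Lemma key (K : realFieldType) (L Rs : finType)
    (P : {set L} * {set Rs} -> K) (l : L) (r : Rs)
    (Hind : others_indep P l r) (h : {set L} * {set Rs} -> K) :
  \sum_(w | inST l r w) P w * h (w.1 :\ l, w.2 :\ r)
  = Pr P (inST l r) * \sum_w P w * h (w.1 :\ l, w.2 :\ r).
Proof.
set f := fun w : {set L} * {set Rs} => (w.1 :\ l, w.2 :\ r).
have E1 : forall Q : pred ({set L} * {set Rs}),
   \sum_(w | Q w) P w * h (f w) = \sum_v h v * \sum_(w | Q w && (f w == v)) P w.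
  move=> Q.
  rewrite (eq_bigr (fun w => \sum_v (if v == f w then P w * h v else 0))); last first.
    move=> w _; rewrite -big_mkcond /= big_pred1_eq //.
  rewrite exchange_big /=; apply: eq_bigr => v _.
  rewrite big_mkcondr mulr_sumr; apply: eq_bigr => w _.
  by rewrite eq_sym; case: ifP => _; rewrite ?mulr0 // mulrC.
rewrite (E1 (inST l r)) (E1 predT) mulr_sumr; apply: eq_bigr => v _.
have := Hind (fun X Y => (X, Y) == v) => /= H.
rewrite /Pr in H.
rewrite (eq_bigl (fun w => ((w.1 :\ l, w.2 :\ r) == v) && inST l r w)); last first.
  by move=> w; rewrite andbC.
rewrite H. rewrite /Pr. ring.
Qed.
Lemma pw (K : realFieldType) (a b A B : K) : 0 < a -> 0 < b -> 0 < A -> 0 < B ->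
  (3 - a / A - b / B) / (A * B) <= (a * b)^-1.
Proof.
move=> ha hb hA hB.
have hu : 0 < a / A by exact: divr_gt0.
have hv : 0 < b / B by exact: divr_gt0.
have := @aux _ _ _ hu hv.
have hab : 0 < a * b by exact: mulr_gt0.
have hAB : 0 < A * B by exact: mulr_gt0.
move=> H.
rewrite -(ler_pM2l hab) mulfV ?gt_eqF //.
have -> : a * b * ((3 - a / A - b / B) / (A * B)) = a / A * (b / B) * (3 - a / A - b / B).
  by field; rewrite ?gt_eqF.
exact: H.
Qed.

Theorem mainTheorem10 (K : realFieldType) (L Rs : finType)
    (P : {set L} * {set Rs} -> K) (l : L) (r : Rs) :
  is_distr P ->
  others_indep P l r ->
  Pr P (inST l r) /
    ((Ex P (fun w => (#|w.1|)%:R) + 1) * (Ex P (fun w => (#|w.2|)%:R) + 1))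
  <= Pr_pick P l r.
Proof.
move=> [P0 P1] Hind.
set h := fun v : {set L} * {set Rs} => ((#|v.1|%:R + 1) * (#|v.2|%:R + 1) : K)^-1.
have Hpick : Pr_pick P l r = \sum_(w | inST l r w) P w * h (w.1 :\ l, w.2 :\ r).
  rewrite /Pr_pick; apply: eq_bigr => w /andP [Hl Hr].
  by rewrite /h /= (cardsD1 l w.1) (cardsD1 r w.2) Hl Hr !natrD !(addrC 1%:R).
rewrite Hpick key //.
set a := fun w : {set L} * {set Rs} => (#|w.1 :\ l|%:R + 1 : K).
set b := fun w : {set L} * {set Rs} => (#|w.2 :\ r|%:R + 1 : K).
set A := \sum_w P w * a w.
set B := \sum_w P w * b w.
have ha : forall w, 0 < a w by move=> w; rewrite /a ltr_pwDr // ler0n.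
have hb : forall w, 0 < b w by move=> w; rewrite /b ltr_pwDr // ler0n.
have hsum : forall X : _ -> K, \sum_w P w * (X w + 1) = \sum_w P w * X w + 1.
  by move=> X; under eq_bigr do rewrite mulrDr mulr1; rewrite big_split P1.
have hA1 : 1 <= A.
  rewrite /A /a hsum lerDr; apply: sumr_ge0 => w _; apply: mulr_ge0 => //.
have hB1 : 1 <= B.
  rewrite /B /b hsum lerDr; apply: sumr_ge0 => w _; apply: mulr_ge0 => //.
have hA : 0 < A by lra.
have hB : 0 < B by lra.
have hAle : A <= Ex P (fun w => (#|w.1|)%:R) + 1.
  rewrite /A /a hsum lerD2r /Ex; apply: ler_sum => w _; apply: ler_wpM2l => //.
  by rewrite ler_nat (cardsD1 l w.1) leq_addl.
have hBle : B <= Ex P (fun w => (#|w.2|)%:R) + 1.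
  rewrite /B /b hsum lerD2r /Ex; apply: ler_sum => w _; apply: ler_wpM2l => //.
  by rewrite ler_nat (cardsD1 r w.2) leq_addl.
have hp : 0 <= Pr P (inST l r) by apply: sumr_ge0.
have step1 : (A * B)^-1 <= \sum_w P w * h (w.1 :\ l, w.2 :\ r).
  have -> : (A * B)^-1 = \sum_w P w * ((3 - a w / A - b w / B) / (A * B)).
    have -> : \sum_w P w * ((3 - a w / A - b w / B) / (A * B))
       = 3 / (A * B) * \sum_w P w - (A * A * B)^-1 * A - (A * B * B)^-1 * B.
      rewrite (eq_bigr (fun w => 3 / (A * B) * P w - (A * A * B)^-1 * (P w * a w)
                 - (A * B * B)^-1 * (P w * b w))); last first.
        by move=> w _; field; rewrite ?gt_eqF.
      by rewrite !sumrB -!mulr_sumr.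
    by rewrite P1; field; rewrite ?gt_eqF.
  apply: ler_sum => w _; apply: ler_wpM2l => //.
  exact: pw.
apply: ler_wpM2l => //.
apply: le_trans step1.
rewrite lef_pV2 ?posrE ?mulr_gt0 //; try lra.
by apply: ler_pM => //; lra.
Qed.
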